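(* Let $A$ and $B$ be commutative associative unital algebras over $\mathbb{C}$ or $\mathbb{R}$, let $n\ge 0$ be an integer, and let $\mathbf{f}\colon A\to B$ be an $n$-homomorphism. Then for every $a\in A$, $$\operatorname{ber}_{\mathbf{f}}(a)=\psi_n(\mathbf{f},a),$$ where $\operatorname{ber}_{\mathbf{f}}(a)=1+\psi_1(\mathbf{f},a-1)+\psi_2(\mathbf{f},a-1)+\dots+\psi_n(\mathbf{f},a-1)$.
   Context: For a linear map $\mathbf{f}\colon A\to B$, its characteristic function is the formal power series $R(\mathbf{f},a,z)=\exp\bigl(\mathbf{f}(\ln(1+az))\bigr)\in B[[z]]$, where $\ln(1+az)=\sum_{k\ge1}(-1)^{k-1}a^kz^k/k$ and $\mathbf{f}$ is applied coefficientwise; write $R(\mathbf{f},a,z)=1+\psi_1(\mathbf{f},a)z+\psi_2(\mathbf{f},a)z^2+\cdots$. Equivalently, $\psi_1(\mathbf{f},a)=\mathbf{f}(a)$ and $\psi_{k+1}(\mathbf{f},a)=\frac{1}{k+1}\bigl(\mathbf{f}(a)\psi_k(\mathbf{f},a)-\mathbf{f}(a^2)\psi_{k-1}(\mathbf{f},a)+\mathbf{f}(a^3)\psi_{k-2}(\mathbf{f},a)-\cdots\bigr)$, with $\psi_0=1$. A linear map $\mathbf{f}$ is an $n$-homomorphism if $\mathbf{f}(1)=n$ and $R(\mathbf{f},a,z)$ is a polynomial in $z$ of degree at most $n$ for every $a\in A$ (i.e. $\psi_k(\mathbf{f},a)=0$ for all $k>n$ and all $a$). For such $\mathbf{f}$,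 the $\mathbf{f}$-Berezinian is $\operatorname{ber}_{\mathbf{f}}(a)=\exp\mathbf{f}(\ln a):=R(\mathbf{f},a-1,1)=\sum_{k=0}^{n}\psi_k(\mathbf{f},a-1)$. *)

(* Defs.v *)
From HB Require Import structures.
From mathcomp Require Import all_boot all_order all_algebra.
Set Implicit Arguments. Unset Strict Implicit. Unset Printing Implicit Defensive.
Import Order.TTheory GRing.Theory Num.Theory.
Local Open Scope ring_scope.

Section Psi.
Variables (K : numFieldType) (A B : comAlgType K).

Fixpoint psis (f : A -> B) (a : A) (k : nat) : seq B :=
  match k with
  | 0 => [:: 1]
  | k'.+1 =>
      let s := psis f a k' in
      rcons s ((k'.+1)%:R^-1 *:
                 \sum_(i < k'.+1) ((-1) ^+ i * f (a ^+ i.+1) * nth 0 s (k' - i)))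
  end.

Definition psi (f : A -> B) (a : A) (k : nat) : B := nth 0 (psis f a k) k.

Definition is_n_hom (n : nat) (f : A -> B) : Prop :=
  f 1 = n%:R /\ forall (a : A) (k : nat), (n < k)%N -> psi f a k = 0.

Definition ber (n : nat) (f : A -> B) (a : A) : B :=
  \sum_(k < n.+1) psi f (a - 1) k.

End Psi.

(* Main.v *)
Require Import Defs.
From HB Require Import structures.
From mathcomp Require Import all_boot all_order all_algebra.
From mathcomp Require Import ring.
Set Implicit Arguments. Unset Strict Implicit.
Import GRing.Theory Num.Theory.
Local Open Scope ring_scope.
Section S.
Variables (K : numFieldType) (A B : comAlgType K).

Lemma size_psis (f : A -> B) a k : size (psis f a k) = k.+1.
Proof. by elim: k => //= k IH; rewrite size_rcons IH. Qed.

Lemma nth_psis (f : A -> B) a k j : (j <= k)%N -> nth 0 (psis f a k) j = psi f a j.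
Proof.
elim: k => [|k IH]; first by rewrite leqn0 => /eqP ->.
rewrite leq_eqVlt => /orP [/eqP -> //|Hj].
by rewrite /= nth_rcons size_psis Hj IH.
Qed.

Lemma psiS (f : A -> B) a k : psi f a k.+1 =
  (k.+1)%:R^-1 *: \sum_(i < k.+1) ((-1) ^+ i * f (a ^+ i.+1) * psi f a (k - i)).
Proof.
rewrite /psi /= nth_rcons size_psis ltnn eqxx; congr (_ *: _).
by apply: eq_bigr => i _; rewrite nth_psis // leq_subr.
Qed.

Lemma psi0 (f : A -> B) a : psi f a 0 = 1.
Proof. by []. Qed.

End S.

Section Cg.
Variable R : comNzRingType.
Implicit Types p q r s : {poly R}.

Definition cg m p q := forall i, (i < m)%N -> p`_i = q`_i.

Lemma cg_refl m p : cg m p p. Proof. by []. Qed.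
Lemma cg_sym m p q : cg m p q -> cg m q p. Proof. by move=> h i hi; rewrite h. Qed.
Lemma cg_trans m p q r : cg m p q -> cg m q r -> cg m p r.
Proof. by move=> h1 h2 i hi; rewrite h1 ?h2. Qed.
Lemma cg_eq m p q : p = q -> cg m p q. Proof. by move=> ->. Qed.
Lemma cg_le m k p q : (k <= m)%N -> cg m p q -> cg k p q.
Proof. by move=> hk h i hi; apply: h; apply: leq_trans hk. Qed.
Lemma cgD m p q r s : cg m p q -> cg m r s -> cg m (p + r) (q + s).
Proof. by move=> h1 h2 i hi; rewrite !coefD h1 ?h2. Qed.
Lemma cgN m p q : cg m p q -> cg m (- p) (- q).
Proof. by move=> h i hi; rewrite !coefN h. Qed.
Lemma cgB m p q r s : cg m p q -> cg m r s -> cg m (p - r) (q - s).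
Proof. by move=> h1 h2; apply: cgD => //; apply: cgN. Qed.
Lemma cgM m p q r s : cg m p q -> cg m r s -> cg m (p * r) (q * s).
Proof.
move=> h1 h2 i hi; rewrite !coefM; apply: eq_bigr => j _.
have hj : (j < m)%N by apply: leq_ltn_trans hi; rewrite -ltnS.
by rewrite h1 // h2 // (leq_ltn_trans (leq_subr _ _) hi).
Qed.
Lemma cgMl m p q r : cg m p q -> cg m (r * p) (r * q).
Proof. by move=> h; apply: cgM. Qed.
Lemma cgMr m p q r : cg m p q -> cg m (p * r) (q * r).
Proof. by move=> h; apply: cgM. Qed.
Lemma cgX m p q k : cg m p q -> cg m (p ^+ k) (q ^+ k).
Proof. by move=> h; elim: k => [|k IH]; rewrite ?expr0 // !exprS; apply: cgM. Qed.
Lemma cgMn m p q k : cg m p q -> cg m (p *+ k) (q *+ k).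
Proof. by move=> h i hi; rewrite !coefMn h. Qed.

Lemma cg_deriv m p q : cg m.+1 p q -> cg m (p^`()) (q^`()).
Proof. by move=> h i hi; rewrite !coef_deriv h. Qed.

Lemma cg0E m p : cg m p 0 -> p = drop_poly m p * 'X^m.
Proof.
move=> h; rewrite -{1}(poly_take_drop m p).
suff -> : take_poly m p = 0 by rewrite add0r.
by apply/polyP => i; rewrite coef_take_poly coef0; case: ifP => // /h ->; rewrite coef0.
Qed.

Lemma cg_comp m p q (w : {poly R}) : w`_0 = 0 -> cg m p q -> cg m (p \Po w) (q \Po w).
Proof.
move=> w0 h.
have hw : w = drop_poly 1 w * 'X.
  apply: (@cg0E 1 w) => i; rewrite ltnS leqn0 => /eqP ->; by rewrite w0 coef0.
have hpq : cg m (p - q) 0 by move=> i hi; rewrite coefB h // subrr coef0.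
have eX : ('X^m \Po w) = w ^+ m by rewrite rmorphXn /= comp_polyX.
rewrite -[p](subrK q) (cg0E hpq) comp_polyD comp_polyM eX.
rewrite hw exprMn => i hi; rewrite coefD mulrA coefMXn hi add0r //.
Qed.

Lemma cg_cancel m u v p q : cg m (u * v) 1 -> cg m (u * p) (u * q) -> cg m p q.
Proof.
move=> huv h.
have e1 : cg m p (v * (u * p)).
  by rewrite mulrA [v * u]mulrC; apply: cg_sym; rewrite -{2}[p]mul1r; apply: cgMr.
have e2 : cg m (v * (u * q)) q.
  by rewrite mulrA [v * u]mulrC; rewrite -{2}[q]mul1r; apply: cgMr.
apply: (cg_trans e1); apply: (cg_trans _ e2); exact: cgMl.
Qed.

Definition ginv (c : R) m : {poly R} := \poly_(i < m) ((- c) ^+ i).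

Lemma ginvP (c : R) m : cg m ((c%:P * 'X + 1) * ginv c m) 1.
Proof.
move=> i hi; rewrite mulrDl mul1r -mulrA coefD coefCM coefXM !coef_poly coef1 hi.
case: i hi => [|i] hi /=; first by rewrite mulr0 add0r expr0.
rewrite (ltnW hi) exprS; ring.
Qed.

Lemma ginv_coef0 (c : R) m : (0 < m)%N -> (ginv c m)`_0 = 1.
Proof. by move=> hm; rewrite coef_poly hm expr0. Qed.

End Cg.

Section Map.
Variables (K : numFieldType) (A B : comAlgType K) (f : {linear A -> B}).

Lemma fsign (i : nat) (x : A) : f ((-1) ^+ i * x) = (-1) ^+ i * f x.
Proof. rewrite -signr_odd -[in RHS]signr_odd !mulr_sign; case: (odd i) => //; exact: raddfN. Qed.

Lemma map_mul_alg (p : {poly A}) (q : {poly K}) :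
  map_poly f (p * map_poly (in_alg A) q) = map_poly f p * map_poly (in_alg B) q.
Proof.
apply/polyP => i; rewrite coef_map !coefM raddf_sum; apply: eq_bigr => j _.
by rewrite !coef_map /= !mulr_algr linearZ.
Qed.

Lemma map_comp_alg (p : {poly A}) (q : {poly K}) :
  map_poly f (p \Po map_poly (in_alg A) q) = map_poly f p \Po map_poly (in_alg B) q.
Proof.
elim/poly_ind: p => [|p c IH]; first by rewrite (@comp_poly0 A) !raddf0.
rewrite (@comp_polyD A) (@comp_polyM A) (@comp_polyX A) (@comp_polyC A) !raddfD /=.
rewrite map_mul_alg IH.
rewrite !map_polyC -[X in map_poly f (p * X)](map_polyX (in_alg A)) map_mul_alg map_polyX.
by rewrite (@comp_polyM B) (@comp_polyX B) (@comp_polyC B).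
Qed.

Lemma cg_map m (p q : {poly A}) : cg m p q -> cg m (map_poly f p) (map_poly f q).
Proof. by move=> h i hi; rewrite !coef_map h. Qed.

End Map.

Lemma cg_mapr (K : numFieldType) (A : comAlgType K) m (p q : {poly K}) :
  cg m p q -> cg m (map_poly (in_alg A) p) (map_poly (in_alg A) q).
Proof. by move=> h i hi; rewrite !coef_map h. Qed.

Section KFacts.
Variable R : comNzRingType.

Lemma cg_eqL m (p q r : {poly R}) : p = q -> cg m q r -> cg m p r.
Proof. by move=> ->. Qed.
Lemma cg_eqR m (p q r : {poly R}) : r = q -> cg m p q -> cg m p r.
Proof. by move=> ->. Qed.

Definition GG m : {poly R} := ginv 1 m.
Definition ww m : {poly R} := 'X * GG m.

Lemma GGP m : cg m (('X + 1) * GG m) 1.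
Proof. by have := @ginvP R 1 m; rewrite polyC1 mul1r. Qed.

Lemma ww0 m : (ww m)`_0 = 0.
Proof. by rewrite /ww coefXM. Qed.

Lemma deriv1' : (1 : {poly R})^`() = 0.
Proof. by rewrite -polyC1 derivC. Qed.

Lemma wwD m : cg m (ww m.+1)^`() (GG m.+1 ^+ 2).
Proof.
set G := GG m.+1; set P : {poly R} := 'X + 1.
have h1 : cg m.+1 (P * G) 1 by exact: GGP.
have h2 := cg_deriv h1.
rewrite derivM derivD derivX deriv1' addr0 mul1r in h2.
have e3 : cg m (P * G^`()) (- G).
  move=> i hi; have := h2 i hi; rewrite coefD coef0 coefN => /eqP.
  by rewrite addrC addr_eq0 => /eqP.
have hPG : cg m (P * G) 1 by apply: cg_le h1.
apply: (cg_cancel (u := P ^+ 2) (v := G ^+ 2)).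
  by rewrite -exprMn -(expr1n _ 2); apply: cgX.
apply: (cg_trans (q := 1)); last first.
  by apply: cg_sym; rewrite -exprMn -(expr1n _ 2); apply: cgX.
rewrite /ww derivM derivX mul1r -/G.
apply: (cg_eqL (q := P * G * P + 'X * P * (P * G^`()))); first by rewrite /P; ring.
apply: (cg_trans (q := P * G * P + 'X * P * (- G))).
  by apply: cgD => //; apply: cgMl.
apply: (cg_eqL (q := P * G)); first by rewrite /P; ring.
exact: hPG.
Qed.

End KFacts.

Lemma GGmap (K : numFieldType) (C : comAlgType K) m :
  map_poly (in_alg C) (GG K m) = GG C m.
Proof.
apply/polyP => i; rewrite coef_map !coef_poly /=; case: ifP => _; last by rewrite scale0r.
by rewrite -signr_odd -[RHS]signr_odd; case: (odd i); rewrite ?expr1 ?expr0 ?scaleN1r ?scale1r.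
Qed.

Lemma wwmap (K : numFieldType) (C : comAlgType K) m :
  map_poly (in_alg C) (ww K m) = ww C m.
Proof. by rewrite /ww rmorphM /= map_polyX GGmap. Qed.

Lemma Pcoef (R : comNzRingType) m :
  (forall i, (m < i)%N -> (('X + 1 : {poly R}) ^+ m)`_i = 0) /\ (('X + 1 : {poly R}) ^+ m)`_m = 1.
Proof.
elim: m => [|m [IH1 IH2]].
  by split; [move=> [|i] //= _; rewrite expr0 coef1 | rewrite expr0 coef1].
have e : forall i, (('X + 1 : {poly R}) ^+ m.+1)`_i = (if i == 0%N then 0 else (('X + 1) ^+ m)`_i.-1) + (('X + 1) ^+ m)`_i.
  by move=> i; rewrite exprSr mulrDr mulr1 coefD coefMX.
split.
  move=> [|i] // hi; rewrite e /= IH1 ?IH1 ?addr0 //; apply: ltn_trans hi; done.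
by rewrite e /= IH2 IH1 ?addr0.
Qed.

Section Main.
Variables (K : numFieldType) (A B : comAlgType K) (f : {linear A -> B}) (n : nat).

Definition ell (a : A) : {poly A} := a%:P * ginv a n.
Definition LL (a : A) : {poly B} := map_poly f (ell a).
Definition Rb (b : A) : {poly B} := \poly_(k < n.+1) psi f b k.

Lemma LL_coef a j : (j < n)%N -> (LL a)`_j = (-1) ^+ j * f (a ^+ j.+1).
Proof.
move=> hj; rewrite /LL /ell coef_map coefCM coef_poly hj [(- a) ^+ j]exprNn /=.
by rewrite mulrCA -exprS fsign.
Qed.

Lemma natK_unit (k : nat) (x : B) : ((k.+1)%:R^-1 : K) *: (x *+ k.+1) = x.
Proof.
by rewrite -scaler_nat scalerA mulVf ?scale1r // pnatr_eq0.
Qed.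

Lemma natK_unit2 (k : nat) (x : B) : (((k.+1)%:R^-1 : K) *: x) *+ k.+1 = x.
Proof.
by rewrite -scaler_nat scalerA mulfV ?scale1r // pnatr_eq0.
Qed.

Lemma ode_unique a (S : {poly B}) : S`_0 = 1 -> cg n S^`() (LL a * S) ->
  forall k, (k <= n)%N -> S`_k = psi f a k.
Proof.
move=> h0 hS.
suff H : forall k, (k <= n)%N -> forall j, (j <= k)%N -> S`_j = psi f a j.
  by move=> k hk; apply: (H k hk).
elim=> [_ j|k IH hk j]; first by rewrite leqn0 => /eqP ->; rewrite h0.
rewrite leq_eqVlt => /orP [/eqP ->|]; last by apply: IH; apply: ltnW.
have h := hS k hk; rewrite coef_deriv coefM in h.
rewrite psiS -[LHS](natK_unit k) h; congr (_ *: _).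
apply: eq_bigr => i _.
rewrite LL_coef; last by apply: leq_ltn_trans hk; rewrite -ltnS.
by rewrite (IH (ltnW hk)) // leq_subr.
Qed.

Lemma ode_b b : cg n (Rb b)^`() (LL b * Rb b).
Proof.
move=> i hi; rewrite coef_deriv coefM /Rb coef_poly ltnS hi psiS natK_unit2.
apply: eq_bigr => j _.
rewrite LL_coef; last by apply: leq_ltn_trans hi; rewrite -ltnS.
by rewrite coef_poly ltnS (leq_trans (leq_subr _ _) (ltnW hi)).
Qed.

End Main.

Section Aside.
Variables (K : numFieldType) (A : comAlgType K) (n : nat).

Lemma Aside (a : A) M : (n <= M)%N ->
  cg n (ell n a) (GG A M + GG A M ^+ 2 * (ell n (a - 1) \Po ww A M)).
Proof.
move=> hM.
have hPG : cg n (('X + 1) * GG A M) 1 := cg_le hM (@GGP A M).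
have ha : a%:P = (a - 1)%:P + 1 by rewrite polyCB polyC1 subrK.
apply: (cg_cancel (u := a%:P * 'X + 1) (v := ginv a n)); first exact: ginvP.
apply: (cg_trans (q := a%:P)).
  apply: (cg_eqL (q := a%:P * ((a%:P * 'X + 1) * ginv a n))); first by rewrite /ell; ring.
  apply: (cg_eqR (q := a%:P * 1)); first by rewrite mulr1.
  apply: cgMl; exact: ginvP.
have hl : cg n (((a - 1)%:P * 'X + 1) * ell n (a - 1)) (a - 1)%:P.
  apply: (cg_eqL (q := (a - 1)%:P * (((a - 1)%:P * 'X + 1) * ginv (a - 1) n))).
    by rewrite /ell; ring.
  apply: (cg_eqR (q := (a - 1)%:P * 1)); first by rewrite mulr1.
  apply: cgMl; exact: ginvP.
have hc : cg n (((a - 1)%:P * ww A M + 1) * (ell n (a - 1) \Po ww A M)) (a - 1)%:P.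
  have := cg_comp (@ww0 A M) hl.
  rewrite (@comp_polyM A) (@comp_polyD A) (@comp_polyM A) (@comp_polyX A) !(@comp_polyC A).
  by rewrite polyC1.
apply: cg_sym.
apply: (cg_trans (q := ('X + 1) * (1 + (a - 1)%:P * ww A M) *
                       (GG A M + GG A M ^+ 2 * (ell n (a - 1) \Po ww A M)))).
  apply: cgMr.
  apply: (cg_eqL (q := ('X + 1) + (a - 1)%:P * 'X * 1)); first by rewrite {1}ha; ring.
  apply: (cg_eqR (q := ('X + 1) + (a - 1)%:P * 'X * (('X + 1) * GG A M))).
    by rewrite /ww; ring.
  by apply: cgD => //; apply: cgMl; apply: cg_sym.
apply: (cg_eqL (q := (('X + 1) * GG A M) * (1 + (a - 1)%:P * ww A M) +
   (('X + 1) * GG A M) * GG A M * (((a - 1)%:P * ww A M + 1) * (ell n (a - 1) \Po ww A M)))).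
  by ring.
apply: (cg_trans (q := 1 * (1 + (a - 1)%:P * ww A M) + 1 * GG A M * (a - 1)%:P)).
  apply: cgD; first by apply: cgMr.
  by apply: cgM => //; apply: cgMr.
apply: (cg_eqL (q := 1 + (a - 1)%:P * (('X + 1) * GG A M))); first by rewrite /ww; ring.
apply: (cg_eqR (q := 1 + (a - 1)%:P * 1)); first by rewrite ha; ring.
by apply: cgD => //; apply: cgMl.
Qed.

End Aside.

Lemma cPn (R : comNzRingType) m M k :
  cg m (('X + 1) * GG R M) 1 ->
  cg m (('X + 1) ^+ k.-1 *+ k) (('X + 1) ^+ k * GG R M *+ k).
Proof.
move=> h; case: k => [|k]; first by rewrite !mulr0n.
apply: cgMn => /=.
apply: (cg_eqL (q := ('X + 1) ^+ k * 1)); first by rewrite mulr1.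
rewrite exprSr -mulrA; apply: cgMl; exact: cg_sym.
Qed.

Section Bside.
Variables (K : numFieldType) (A B : comAlgType K) (f : {linear A -> B}) (n : nat).
Hypothesis f1 : f 1 = n%:R.

Definition SS (b : A) : {poly B} := ('X + 1) ^+ n * (Rb f n b \Po ww B n.+2).

Lemma Tstep (a : A) :
  cg n (LL f n a) (GG B n.+2 *+ n + GG B n.+2 ^+ 2 * (LL f n (a - 1) \Po ww B n.+2)).
Proof.
have h := cg_map f (@Aside K A n a n.+2 (leqW (leqnSn n))).
apply: (cg_eqR _ h).
rewrite raddfD /=.
have e1 : map_poly f (GG A n.+2) = GG B n.+2 *+ n.
  rewrite -(@GGmap K A) -[map_poly _ (GG K _)]mul1r map_mul_alg GGmap.
  have ef : (f 1)%:P = (n%:R)%:P :> {poly B} by congr (_%:P); exact: f1.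
  by rewrite -polyC1 map_polyC ef rmorph_nat mulr_natl.
have e2 : map_poly f (GG A n.+2 ^+ 2 * (ell n (a - 1) \Po ww A n.+2)) =
          GG B n.+2 ^+ 2 * (LL f n (a - 1) \Po ww B n.+2).
  rewrite mulrC -(@GGmap K A) -rmorphXn -(@wwmap K A) map_mul_alg map_comp_alg.
  by rewrite rmorphXn /= (@GGmap K B) (@wwmap K B) mulrC.
by rewrite e1 e2.
Qed.

Lemma S_ode (a : A) : cg n (SS (a - 1))^`() (LL f n a * SS (a - 1)).
Proof.
rewrite /SS derivM (@deriv_comp B) deriv_exp derivD derivX deriv1' addr0 mul1r.
have hPG : cg n (('X + 1) * GG B n.+2) 1 := cg_le (leqW (leqnSn n)) (@GGP B n.+2).
have c1 := @cPn B n n.+2 n hPG.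
have c2 : cg n ((Rb f n (a - 1))^`() \Po ww B n.+2)
             ((LL f n (a - 1) \Po ww B n.+2) * (Rb f n (a - 1) \Po ww B n.+2)).
  by have := cg_comp (@ww0 B n.+2) (@ode_b K A B f n (a - 1)); rewrite (@comp_polyM B).
have c3 : cg n (ww B n.+2)^`() (GG B n.+2 ^+ 2) := cg_le (leqnSn n) (@wwD B n.+1).
apply: (cg_trans (q := ('X + 1) ^+ n * GG B n.+2 *+ n * (Rb f n (a - 1) \Po ww B n.+2) +
   ('X + 1) ^+ n * (((LL f n (a - 1) \Po ww B n.+2) * (Rb f n (a - 1) \Po ww B n.+2)) * GG B n.+2 ^+ 2))).
  apply: cgD; first by apply: cgMr.
  by apply: cgMl; apply: cgM.
apply: (cg_eqL (q := (GG B n.+2 *+ n + GG B n.+2 ^+ 2 * (LL f n (a - 1) \Po ww B n.+2)) *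
                     (('X + 1) ^+ n * (Rb f n (a - 1) \Po ww B n.+2)))).
  by ring.
apply: cgMr; apply: cg_sym; exact: Tstep.
Qed.

Lemma S0 (b : A) : (SS b)`_0 = 1.
Proof.
rewrite /SS -horner_coef0 hornerM horner_exp (@horner_comp B).
rewrite [(ww B n.+2).[0]]horner_coef0 (@ww0 B) horner_coef0 /Rb horner_coef0 coef_poly /=.
by rewrite coefD coefX coef1 add0r expr1n mul1r.
Qed.

Lemma S_coef (b : A) : (SS b)`_n = \sum_(k < n.+1) psi f b k.
Proof.
have hPG : cg n.+1 (('X + 1) * GG B n.+2) 1 := cg_le (leqnSn n.+1) (@GGP B n.+2).
rewrite /SS /Rb poly_def raddf_sum mulr_sumr coef_sum; apply: eq_bigr => k _.
rewrite /= (@comp_polyZ B) -scalerAr coefZ.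
have -> : ('X^k \Po ww B n.+2) = ww B n.+2 ^+ k by rewrite rmorphXn /= (@comp_polyX B).
have hk : (k <= n)%N by rewrite -ltnS.
have e : ('X + 1 : {poly B}) ^+ n = ('X + 1) ^+ (n - k) * ('X + 1) ^+ k.
  by rewrite -exprD subnK.
have c : cg n.+1 (('X + 1) ^+ n * ww B n.+2 ^+ k) ('X^k * ('X + 1) ^+ (n - k) * 1).
  apply: (cg_eqL (q := 'X^k * ('X + 1) ^+ (n - k) * (('X + 1) * GG B n.+2) ^+ k)).
    by rewrite e /ww !exprMn; ring.
  apply: cgMl; apply: (cg_eqR (q := 1 ^+ k)); first by rewrite expr1n.
  by apply: cgX.
rewrite (c n (ltnSn n)) mulr1 coefXnM ltnNge hk /=.
by rewrite (proj2 (Pcoef _ _)) mulr1.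
Qed.

End Bside.

Theorem mainTheorem1 (K : numFieldType) (A B : comAlgType K) (n : nat)
    (f : {linear A -> B}) :
  is_n_hom n f -> forall a : A, ber n f a = psi f a n.
Proof.
move=> [f1 _] a.
rewrite /ber -(@S_coef K A B f n (a - 1)).
apply: (@ode_unique K A B f n a); last exact: leqnn.
  exact: S0.
exact: S_ode.
Qed.
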